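(* Let $L\ge1$, $\delta>0$, $\lambda^0=(\lambda^0_1,\dots,\lambda^0_L)\in(0,\infty)^L$, and let $c_1,\dots,c_L:[0,\infty)\to\mathbb{R}$ be continuous and strictly increasing. For $m\in\mathbb{N}$ put $\lambda^m_i=m\lambda^0_i$ and, for $\beta=(\beta_1,\dots,\beta_L)\in[0,\infty)^L$, $$f_m(\beta)=\sum_{i=1}^L c_i(\beta_i)+\delta\Big(1-\prod_{i=1}^L\big(1-\tilde\alpha(\beta_i,\lambda^m_i)\big)\Big),\qquad g_m(\beta)=\sum_{i=1}^L c_i(\beta_i)+\delta\Big(1-\prod_{i=1}^L\big(1-UB(\beta_i,\lambda^m_i)\big)\Big).$$ Then $\displaystyle\lim_{m\to\infty}\sup_{\beta\ge0}\big(g_m(\beta)-f_m(\beta)\big)=0.$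
   Context: $\phi,\Phi$ are the standard normal density and distribution function. For $\lambda>0$ and real $n\ge 0$, $\bar\alpha(n,\lambda)=\min\Big\{1,\big[\lambda\int_0^\infty t e^{-\lambda t}(1+t)^{n-1}\,dt\big]^{-1}\Big\}$ is the continuous Erlang-C function, and $\tilde\alpha(\beta,\lambda)=\bar\alpha(\lambda+\beta\sqrt\lambda,\lambda)$. For $\lambda>0,\beta\ge 0$ set $n=\lambda+\beta\sqrt{\lambda}$, $\rho=\lambda/n$, $a=\sqrt{-2n(1-\rho+\ln\rho)}$, $\gamma=(n-\lambda)/\sqrt{n}$, and $UB(\beta,\lambda)=\left[\rho+\gamma\left(\frac{\Phi(a)}{\phi(a)}+\frac{2}{3\sqrt{n}}\right)\right]^{-1}$ (so $UB(0,\lambda)=1$). It is known (Janssen, van Leeuwaarden and Zwart) that $\tilde\alpha(\beta,\lambda)\le UB(\beta,\lambda)$ for all $\lambda,\beta>0$. *)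

(* Defs.v *)
From Stdlib Require Import Reals Lra Lia ClassicalEpsilon.
Open Scope R_scope.

Definition improper_int_upper (f : R -> R) (a I : R) : Prop :=
  forall eps, 0 < eps -> exists M, forall b, M <= b ->
    exists pr : Riemann_integrable f a b, Rabs (RiemannInt pr - I) < eps.

Definition improper_int_lower (f : R -> R) (x I : R) : Prop :=
  forall eps, 0 < eps -> exists M, forall b, b <= M ->
    exists pr : Riemann_integrable f b x, Rabs (RiemannInt pr - I) < eps.

(* The value of int_a^oo f (chosen by epsilon; meaningful when it converges). *)
Definition int_a_infty (f : R -> R) (a : R) : R :=
  epsilon (inhabits 0) (fun I => improper_int_upper f a I).

Definition int_minfty_x (f : R -> R) (x : R) : R :=
  epsilon (inhabits 0) (fun I => improper_int_lower f x I).

Definition phi (t : R) : R := / sqrt (2 * PI) * exp (- (t ^ 2) / 2).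
Definition Phi (x : R) : R := int_minfty_x phi x.

Definition erlang_integrand (n lam : R) (t : R) : R :=
  t * exp (- lam * t) * Rpower (1 + t) (n - 1).

Definition alpha_bar (n lam : R) : R :=
  Rmin 1 (/ (lam * int_a_infty (erlang_integrand n lam) 0)).

Definition alpha_tilde (beta lam : R) : R :=
  alpha_bar (lam + beta * sqrt lam) lam.

Definition UB (beta lam : R) : R :=
  let n := lam + beta * sqrt lam in
  let rho := lam / n in
  let a := sqrt (- 2 * n * (1 - rho + ln rho)) in
  let gamma := (n - lam) / sqrt n in
  / (rho + gamma * (Phi a / phi a + 2 / (3 * sqrt n))).

(* finite sums / products over indices 0 .. L-1 *)
Fixpoint sum_to (L : nat) (F : nat -> R) : R :=
  match L with O => 0 | S k => sum_to k F + F k end.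
Fixpoint prod_to (L : nat) (F : nat -> R) : R :=
  match L with O => 1 | S k => prod_to k F * F k end.

Definition f_m (L : nat) (c : nat -> R -> R) (delta : R) (lam0 : nat -> R)
  (m : nat) (beta : nat -> R) : R :=
  sum_to L (fun i => c i (beta i)) +
  delta * (1 - prod_to L (fun i => 1 - alpha_tilde (beta i) (INR m * lam0 i))).

Definition g_m (L : nat) (c : nat -> R -> R) (delta : R) (lam0 : nat -> R)
  (m : nat) (beta : nat -> R) : R :=
  sum_to L (fun i => c i (beta i)) +
  delta * (1 - prod_to L (fun i => 1 - UB (beta i) (INR m * lam0 i))).

Definition gap_set (L : nat) (c : nat -> R -> R) (delta : R) (lam0 : nat -> R)
  (m : nat) : R -> Prop :=
  fun y => exists beta : nat -> R,
    (forall i, (i < L)%nat -> 0 <= beta i) /\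
    y = g_m L c delta lam0 m beta - f_m L c delta lam0 m beta.

(* Main.v *)
Require Import Defs.
From Stdlib Require Import Reals Lra Psatz Classical ClassicalEpsilon.
From Coquelicot Require Import Coquelicot.
Open Scope R_scope.


Lemma mono0 (f df : R -> R) :
  (forall x, 0 <= x -> is_derive f x (df x)) ->
  (forall x, 0 <= x -> 0 <= df x) -> forall t, 0 <= t -> f 0 <= f t.
Proof.
  intros Hd Hp t Ht.
  destruct (MVT_gen f 0 t df) as [c [Hc Heq]].
  - intros x Hx. apply Hd. rewrite Rmin_left in Hx by lra. lra.
  - intros x Hx. rewrite Rmin_left in Hx by lra.
    apply derivable_continuous_pt. exists (df x). apply is_derive_Reals. apply Hd. lra.
  - rewrite Rmin_left in Hc by lra. rewrite Rmax_right in Hc by lra.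
    assert (0 <= df c) by (apply Hp; lra). nra.
Qed.

Lemma ln1_ge0 t : 0 <= t -> 0 <= ln (1 + t).
Proof. intros. rewrite <- ln_1. apply ln_le; lra. Qed.

Lemma ln_ub1 t : 0 <= t -> ln (1 + t) <= t - t^2 / (2 * (1 + t)).
Proof.
  intros Ht.
  pose (f := fun x => x - x^2 / (2 * (1 + x)) - ln (1 + x)).
  assert (f 0 <= f t).
  { apply (mono0 f (fun x => x^2 / (2 * (1+x)^2))).
    - intros x Hx. unfold f. auto_derive. lra. field. lra.
    - intros x Hx. apply Rmult_le_pos. nra. apply Rlt_le, Rinv_0_lt_compat. nra.
    - auto. }
  unfold f in H. replace (1 + 0) with 1 in H by ring. rewrite ln_1 in H. lra.
Qed.

Lemma ln_ub2 t : 0 <= t -> ln (1 + t) <= t - t^2 / 2 + t^3 / 3.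
Proof.
  intros Ht.
  pose (f := fun x => x - x^2 / 2 + x^3/3 - ln (1 + x)).
  assert (f 0 <= f t).
  { apply (mono0 f (fun x => x^3 / (1+x))).
    - intros x Hx. unfold f. auto_derive. lra. field. lra.
    - intros x Hx. apply Rmult_le_pos. nra. apply Rlt_le, Rinv_0_lt_compat. nra.
    - auto. }
  unfold f in H. replace (1 + 0) with 1 in H by ring. rewrite ln_1 in H. lra.
Qed.

Lemma ln_lb t : 0 <= t -> t - t^2 / 2 <= ln (1 + t).
Proof.
  intros Ht.
  pose (f := fun x => ln (1 + x) - x + x^2 / 2).
  assert (f 0 <= f t).
  { apply (mono0 f (fun x => x^2 / (1+x))).
    - intros x Hx. unfold f. auto_derive. lra. field. lra.
    - intros x Hx. apply Rmult_le_pos. nra. apply Rlt_le, Rinv_0_lt_compat. nra.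
    - auto. }
  unfold f in H. replace (1 + 0) with 1 in H by ring. rewrite ln_1 in H. lra.
Qed.

Lemma mono_lim_up (G : R -> R) (a K : R) :
  (forall b b', a <= b -> b <= b' -> G b <= G b') -> (forall b, a <= b -> G b <= K) ->
  exists I, forall eps, 0 < eps -> exists M, forall b, M <= b -> Rabs (G b - I) < eps.
Proof.
  intros Hm Hb.
  destruct (completeness (fun y => exists b, a <= b /\ y = G b)) as [I [HI1 HI2]].
  - exists K. intros y [b [Hab ->]]. auto.
  - exists (G a), a. split; [lra|auto].
  - exists I. intros eps He.
    destruct (classic (exists b, a <= b /\ I - eps < G b)) as [[b0 [Hb0 Hlt]]|Hn].
    + exists b0. intros b Hbb. assert (G b0 <= G b) by (apply Hm; lra).
      assert (G b <= I) by (apply HI1; exists b; split; [lra|auto]).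
      apply Rabs_def1; lra.
    + exfalso. assert (I <= I - eps); [|lra].
      apply HI2. intros y [b [Hab ->]].
      apply Rnot_lt_le. intro. apply Hn. exists b. auto.
Qed.

Lemma mono_lim_low (G : R -> R) (x K : R) :
  (forall b b', b' <= b -> b <= x -> G b <= G b') -> (forall b, b <= x -> G b <= K) ->
  exists I, forall eps, 0 < eps -> exists M, forall b, b <= M -> Rabs (G b - I) < eps.
Proof.
  intros Hm Hb.
  destruct (mono_lim_up (fun b => G (- b)) (- x) K) as [I HI].
  - intros b b' H1 H2. apply Hm; lra.
  - intros b H. apply Hb; lra.
  - exists I. intros eps He. destruct (HI eps He) as [M HM]. exists (- M).
    intros b Hbb. replace b with (- - b) by ring. apply HM. lra.
Qed.

Lemma int_up (f : R -> R) (a K : R) :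
  (forall x, a <= x -> continuous f x) -> (forall x, a <= x -> 0 <= f x) ->
  (forall b, a <= b -> RInt f a b <= K) ->
  (forall b, a <= b -> RInt f a b <= int_a_infty f a) /\ int_a_infty f a <= K.
Proof.
  intros Hc Hp HK.
  assert (Hex : forall b, a <= b -> ex_RInt f a b).
  { intros b Hb. apply (ex_RInt_continuous (V:=R_CompleteNormedModule)). intros z Hz.
    rewrite Rmin_left in Hz by lra. apply Hc. lra. }
  assert (Hm : forall b b', a <= b -> b <= b' -> RInt f a b <= RInt f a b').
  { intros b b' H1 H2. rewrite <- (RInt_Chasles (V:=R_CompleteNormedModule) f a b b').
    - assert (0 <= RInt f b b'). { apply RInt_ge_0; auto.
        apply (ex_RInt_continuous (V:=R_CompleteNormedModule)). intros z Hz. rewrite Rmin_left in Hz by lra. apply Hc. lra.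
        intros; apply Hp; lra. }
      simpl. unfold plus; simpl. lra.
    - apply Hex; lra.
    - apply (ex_RInt_continuous (V:=R_CompleteNormedModule)). intros z Hz. rewrite Rmin_left in Hz by lra. apply Hc. lra. }
  destruct (mono_lim_up (fun b => RInt f a b) a K Hm HK) as [I0 HI0].
  assert (Hspec : improper_int_upper f a (int_a_infty f a)).
  { unfold int_a_infty. apply epsilon_spec. exists I0. intros eps He.
    destruct (HI0 eps He) as [M HM]. exists (Rmax M a). intros b Hb.
    assert (a <= b) by (eapply Rle_trans; [apply Rmax_r|exact Hb]).
    exists (ex_RInt_Reals_0 _ _ _ (Hex b H)). rewrite <- RInt_Reals.
    apply HM. eapply Rle_trans; [apply Rmax_l|exact Hb]. }
  set (I := int_a_infty f a) in *.
  assert (Hlim : forall eps, 0 < eps -> exists M, forall b, M <= b -> a <= b /\ Rabs (RInt f a b - I) < eps).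
  { intros eps He. destruct (Hspec eps He) as [M HM]. exists (Rmax M a). intros b Hb.
    assert (a <= b) by (eapply Rle_trans; [apply Rmax_r|exact Hb]).
    split; auto. destruct (HM b) as [pr Hpr]. eapply Rle_trans; [apply Rmax_l|exact Hb].
    rewrite (RInt_Reals f a b pr). auto. }
  split.
  - intros b Hb. apply Rnot_lt_le. intro Hlt.
    destruct (Hlim (RInt f a b - I)) as [M HM]. lra.
    destruct (HM (Rmax M b) (Rmax_l _ _)) as [_ H2].
    assert (RInt f a b <= RInt f a (Rmax M b)) by (apply Hm; [lra|apply Rmax_r]).
    apply Rabs_def2 in H2. lra.
  - apply Rnot_lt_le. intro Hlt.
    destruct (Hlim (I - K)) as [M HM]. lra.
    destruct (HM M (Rle_refl _)) as [H1 H2].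
    assert (RInt f a M <= K) by auto. apply Rabs_def2 in H2. lra.
Qed.

Lemma int_low (f : R -> R) (x K : R) :
  (forall t, t <= x -> continuous f t) -> (forall t, t <= x -> 0 <= f t) ->
  (forall b, b <= x -> RInt f b x <= K) ->
  (forall b, b <= x -> RInt f b x <= int_minfty_x f x).
Proof.
  intros Hc Hp HK.
  assert (Hex : forall b b', b <= b' -> b' <= x -> ex_RInt f b b').
  { intros b b' H1 H2. apply (ex_RInt_continuous (V:=R_CompleteNormedModule)). intros z Hz.
    rewrite Rmin_left in Hz by lra. rewrite Rmax_right in Hz by lra. apply Hc. lra. }
  assert (Hm : forall b b', b' <= b -> b <= x -> RInt f b x <= RInt f b' x).
  { intros b b' H1 H2. rewrite <- (RInt_Chasles (V:=R_CompleteNormedModule) f b' b x).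
    - assert (0 <= RInt f b' b). { apply RInt_ge_0. exact H1. apply Hex; lra.
        intros; apply Hp; lra. }
      simpl. unfold plus; simpl. lra.
    - apply Hex; lra.
    - apply Hex; lra. }
  destruct (mono_lim_low (fun b => RInt f b x) x K Hm HK) as [I0 HI0].
  assert (Hspec : improper_int_lower f x (int_minfty_x f x)).
  { unfold int_minfty_x. apply epsilon_spec. exists I0. intros eps He.
    destruct (HI0 eps He) as [M HM]. exists (Rmin M x). intros b Hb.
    assert (b <= x) by (eapply Rle_trans; [exact Hb|apply Rmin_r]).
    exists (ex_RInt_Reals_0 _ _ _ (Hex b x H (Rle_refl _))). rewrite <- RInt_Reals.
    apply HM. eapply Rle_trans; [exact Hb|apply Rmin_l]. }
  set (I := int_minfty_x f x) in *.
  intros b Hb. apply Rnot_lt_le. intro Hlt.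
  destruct (Hspec (RInt f b x - I)) as [M HM]. lra.
  destruct (HM (Rmin M b) (Rmin_l _ _)) as [pr Hpr].
  rewrite <- (RInt_Reals f _ _ pr) in Hpr.
  assert (RInt f b x <= RInt f (Rmin M b) x) by (apply Hm; [apply Rmin_r|lra]).
  apply Rabs_def2 in Hpr. lra.
Qed.

Lemma scalR (x y : R) : scal x y = x * y. Proof. reflexivity. Qed.
Lemma oppR (x : R) : opp x = - x. Proof. reflexivity. Qed.
Lemma plusR (x y : R) : plus x y = x + y. Proof. reflexivity. Qed.
Lemma minusR (x y : R) : minus x y = x - y. Proof. reflexivity. Qed.

Lemma exR (f : R -> R) a b : a <= b -> (forall x, a <= x <= b -> continuous f x) -> ex_RInt f a b.
Proof.
  intros Hab Hc. apply (ex_RInt_continuous (V:=R_CompleteNormedModule)).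
  intros z Hz. rewrite Rmin_left in Hz by lra. rewrite Rmax_right in Hz by lra. auto.
Qed.

Lemma RInt_le2 (f g : R -> R) a b : a <= b ->
  (forall x, a <= x <= b -> continuous f x) -> (forall x, a <= x <= b -> continuous g x) ->
  (forall x, a <= x <= b -> f x <= g x) -> RInt f a b <= RInt g a b.
Proof.
  intros Hab Hf Hg H. apply RInt_le; auto; try (apply exR; auto).
  intros; apply H; lra.
Qed.

Lemma RInt_ge0' (f : R -> R) a b : a <= b ->
  (forall x, a <= x <= b -> continuous f x) -> (forall x, a <= x <= b -> 0 <= f x) -> 0 <= RInt f a b.
Proof.
  intros Hab Hf H. apply RInt_ge_0; auto. apply exR; auto. intros; apply H; lra.
Qed.

Lemma RInt_split (f : R -> R) a b c : a <= b -> b <= c ->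
  (forall x, a <= x <= c -> continuous f x) -> RInt f a c = RInt f a b + RInt f b c.
Proof.
  intros H1 H2 Hc. rewrite <- (RInt_Chasles (V:=R_CompleteNormedModule) f a b c).
  reflexivity. apply exR; auto; intros; apply Hc; lra. apply exR; auto; intros; apply Hc; lra.
Qed.

Lemma RInt_scal' (f : R -> R) k a b : a <= b -> (forall x, a <= x <= b -> continuous f x) ->
  RInt (fun x => k * f x) a b = k * RInt f a b.
Proof.
  intros Hab Hc. rewrite <- scalR. rewrite <- (RInt_scal (V:=R_CompleteNormedModule)).
  reflexivity. apply exR; auto.
Qed.

Lemma RInt_deriv (F f : R -> R) a b : a <= b ->
  (forall x, a <= x <= b -> is_derive F x (f x)) -> (forall x, a <= x <= b -> continuous f x) ->
  RInt f a b = F b - F a.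
Proof.
  intros Hab Hd Hc. apply is_RInt_unique.
  apply (is_RInt_derive (V:=R_CompleteNormedModule)).
  intros x Hx; rewrite Rmin_left in Hx by lra; rewrite Rmax_right in Hx by lra; auto.
  intros x Hx; rewrite Rmin_left in Hx by lra; rewrite Rmax_right in Hx by lra; auto.
Qed.

Lemma exp_mono x y : x <= y -> exp x <= exp y.
Proof. intros [H|H]. left; apply exp_increasing; auto. subst; lra. Qed.

Ltac cont_tac := apply (ex_derive_continuous (K:=R_AbsRing) (V:=R_NormedModule)); auto_derive.

Definition E (a u : R) : R := exp (a * u - u ^ 2 / 2).
Definition G (a M : R) : R := RInt (E a) 0 M.

Lemma contE a u : continuous (E a) u.
Proof. unfold E. cont_tac. auto. Qed.

Lemma E_pos a u : 0 < E a u.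
Proof. apply exp_pos. Qed.

Lemma G_ge0 a M : 0 <= M -> 0 <= G a M.
Proof. intros. apply RInt_ge0'; auto. intros; apply contE. intros; left; apply E_pos. Qed.

Lemma cont_phi t : continuous phi t.
Proof. unfold phi. cont_tac. auto. Qed.

Lemma phi_pos t : 0 < phi t.
Proof.
  unfold phi. apply Rmult_lt_0_compat. apply Rinv_0_lt_compat, sqrt_lt_R0.
  generalize PI_RGT_0; lra. apply exp_pos.
Qed.

Lemma Phi_ge a M : 0 <= M -> phi a * G a M <= Phi a.
Proof.
  intros HM.
  set (C := / sqrt (2 * PI)).
  assert (HC : 0 < C). { apply Rinv_0_lt_compat, sqrt_lt_R0. generalize PI_RGT_0; lra. }
  assert (Hlow := int_low phi a (C * exp (a + /2)) (fun t _ => cont_phi t)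
     (fun t _ => Rlt_le _ _ (phi_pos t))).
  assert (H1 : RInt phi (a - M) a <= Phi a).
  { unfold Phi. apply Hlow; [|lra].
    intros b Hb.
    assert (RInt phi b a <= RInt (fun t => C * exp (t + /2)) b a).
    { apply RInt_le2; auto. intros; apply cont_phi. intros; cont_tac; auto.
      intros x Hx. unfold phi. fold C. apply Rmult_le_compat_l. lra.
      apply exp_mono. pose proof (pow2_ge_0 (x+1)). replace (x + /2) with (x + 1/2) by field. unfold pow in *. nra. }
    rewrite (RInt_deriv (fun t => C * exp (t + /2)) (fun t => C * exp (t + /2))) in H; auto.
    assert (0 < C * exp (b + /2)) by (apply Rmult_lt_0_compat; auto; apply exp_pos). lra.
    intros x Hx. auto_derive. auto. ring.
    intros; cont_tac; auto. }
  assert (H2 : RInt phi (a - M) a = phi a * G a M).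
  { unfold G. rewrite <- RInt_scal'; auto; [|intros; apply contE].
    assert (Hcl := RInt_comp_lin (V:=R_CompleteNormedModule) phi (-1) a 0 M).
    assert (Hex : forall u v, ex_RInt phi u v).
    { intros u v. apply (ex_RInt_continuous (V:=R_CompleteNormedModule)). intros; apply cont_phi. }
    specialize (Hcl (Hex _ _)).
    rewrite RInt_scal in Hcl. rewrite scalR in Hcl.
    replace (-1 * M + a) with (a - M) in Hcl by ring. replace (-1 * 0 + a) with a in Hcl by ring.
    assert (Hsw : RInt phi a (a-M) = - RInt phi (a-M) a).
    { rewrite <- (opp_RInt_swap (V:=R_CompleteNormedModule)). reflexivity. apply Hex. }
    rewrite Hsw in Hcl.
    replace (RInt phi (a - M) a) with (RInt (fun y : R => phi (-1 * y + a)) 0 M) by lra.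
    replace (RInt (fun x => phi a * E a x) 0 M) with (RInt (fun y => phi (-1 * y + a)) 0 M).
    reflexivity.
    apply RInt_ext. intros x _. unfold phi, E. rewrite Rmult_assoc, <- exp_plus. f_equal. f_equal. field.
    apply (ex_RInt_continuous (V:=R_CompleteNormedModule)). intros. unfold phi. cont_tac. auto.
    }
  lra.
Qed.

Definition nn lam beta := lam + beta * sqrt lam.
Definition aa lam beta := sqrt (- 2 * nn lam beta * (1 - lam / nn lam beta + ln (lam / nn lam beta))).
Definition gg lam beta := (nn lam beta - lam) / sqrt (nn lam beta).

Lemma UB_eq lam beta : UB beta lam =
  / (lam / nn lam beta + gg lam beta * (Phi (aa lam beta) / phi (aa lam beta) + 2 / (3 * sqrt (nn lam beta)))).
Proof. reflexivity. Qed.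

Lemma sqrt_pos' x : 0 < x -> 0 < sqrt x.
Proof. apply sqrt_lt_R0. Qed.

Lemma nn_pos lam beta : 0 < lam -> 0 <= beta -> lam <= nn lam beta.
Proof. intros. unfold nn. assert (0 < sqrt lam) by (apply sqrt_pos'; auto). nra. Qed.

Lemma gg_ge0 lam beta : 0 < lam -> 0 <= beta -> 0 <= gg lam beta.
Proof.
  intros. unfold gg. assert (lam <= nn lam beta) by (apply nn_pos; auto).
  apply Rmult_le_pos. lra. left. apply Rinv_0_lt_compat, sqrt_pos'. lra.
Qed.

Lemma Phi_ratio a M : 0 <= M -> G a M <= Phi a / phi a.
Proof.
  intros HM. assert (H := Phi_ge a M HM). assert (H0 := phi_pos a).
  unfold Rdiv. apply (Rmult_le_reg_l (phi a)); auto. field_simplify; try lra.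
Qed.

Lemma UB_le lam beta M : 0 < lam -> 0 <= beta -> 0 <= M ->
  0 < UB beta lam /\
  UB beta lam <= / (lam / nn lam beta + gg lam beta * G (aa lam beta) M).
Proof.
  intros Hl Hb HM. rewrite UB_eq.
  assert (Hn : lam <= nn lam beta) by (apply nn_pos; auto).
  assert (Hr : 0 < lam / nn lam beta) by (apply Rdiv_lt_0_compat; lra).
  assert (Hg := gg_ge0 lam beta Hl Hb).
  assert (HG := G_ge0 (aa lam beta) M HM).
  assert (HP := Phi_ratio (aa lam beta) M HM).
  assert (Hs : 0 < sqrt (nn lam beta)) by (apply sqrt_pos'; lra).
  assert (H3 : 0 <= 2 / (3 * sqrt (nn lam beta))) by (apply Rlt_le, Rdiv_lt_0_compat; lra).
  assert (0 <= gg lam beta * G (aa lam beta) M) by (apply Rmult_le_pos; auto).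
  assert (gg lam beta * G (aa lam beta) M <= gg lam beta *
     (Phi (aa lam beta) / phi (aa lam beta) + 2 / (3 * sqrt (nn lam beta)))).
  { apply Rmult_le_compat_l; auto. lra. }
  split.
  - apply Rinv_0_lt_compat. lra.
  - apply Rinv_le_contravar. lra. lra.
Qed.

Lemma G1_ge a : 0 <= a -> exp (- / 2) <= G a 1.
Proof.
  intros Ha. unfold G.
  assert (RInt (fun _ => exp (- / 2)) 0 1 <= RInt (E a) 0 1).
  { apply RInt_le2. lra. intros; apply continuous_const. intros; apply contE.
    intros x Hx. unfold E. apply exp_mono. nra. }
  rewrite RInt_const, scalR in H. lra.
Qed.

Lemma exp_half : / 3 <= exp (- / 2).
Proof.
  rewrite exp_Ropp. apply Rinv_le_contravar. apply exp_pos.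
  eapply Rle_trans; [|apply exp_le_3]. apply exp_mono. lra.
Qed.

Lemma aa_ge0 lam beta : 0 <= aa lam beta.
Proof. apply sqrt_pos. Qed.

Lemma UB_le1 lam beta : 1 <= lam -> 0 <= beta -> UB beta lam <= 1.
Proof.
  intros Hl Hb. rewrite UB_eq.
  assert (Hn : lam <= nn lam beta) by (apply nn_pos; auto; lra).
  assert (Hs : 1 <= sqrt (nn lam beta)).
  { rewrite <- sqrt_1. apply sqrt_le_1; lra. }
  assert (Hg := gg_ge0 lam beta ltac:(lra) Hb).
  assert (HP := Phi_ratio (aa lam beta) 1 ltac:(lra)).
  assert (HG := G1_ge _ (aa_ge0 lam beta)).
  assert (He := exp_half).
  set (n := nn lam beta) in *. set (s := sqrt n) in *.
  assert (Hsn : s * s = n) by (apply sqrt_sqrt; lra).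
  assert (Hrho : 1 - lam / n = gg lam beta / s).
  { unfold gg. fold n. fold s. field_simplify; try lra. rewrite <- Hsn. field. lra. }
  set (g := gg lam beta) in *. set (P := Phi (aa lam beta) / phi (aa lam beta)) in *.
  assert (1 <= lam / n + g * (P + 2 / (3 * s))).
  { assert (/ s <= 1). { rewrite <- Rinv_1. apply Rinv_le_contravar; lra. }
    assert (g / s + 0 <= g * (P + 2 / (3 * s))).
    { unfold Rdiv. replace (g * (P + 2 * / (3 * s))) with (g * (P + 2/3 * / s)) by (field; lra).
      assert (0 <= g * (P - 1/3 * / s)).
      { apply Rmult_le_pos; auto. lra. }
      nra. }
    lra. }
  rewrite <- Rinv_1. apply Rinv_le_contravar; lra.
Qed.

Lemma gg_sq lam beta : 0 < lam -> 0 <= beta ->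
  gg lam beta ^ 2 * nn lam beta = beta ^ 2 * lam.
Proof.
  intros Hl Hb. unfold gg.
  assert (Hn : lam <= nn lam beta) by (apply nn_pos; auto).
  assert (Hs : sqrt (nn lam beta) * sqrt (nn lam beta) = nn lam beta) by (apply sqrt_sqrt; lra).
  assert (Hs2 : sqrt lam * sqrt lam = lam) by (apply sqrt_sqrt; lra).
  assert (0 < sqrt (nn lam beta)) by (apply sqrt_pos'; lra).
  replace (nn lam beta - lam) with (beta * sqrt lam) by (unfold nn; ring).
  set (r := sqrt (nn lam beta)) in *. rewrite <- Hs.
  replace (beta ^ 2 * lam) with (beta^2 * (sqrt lam * sqrt lam)) by (rewrite Hs2; auto).
  field. lra.
Qed.

Lemma UB_bigbeta lam beta eps : 1 <= lam -> 0 < eps -> 18 / eps ^ 2 <= beta -> 1 <= beta ->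
  UB beta lam <= eps.
Proof.
  intros Hl He HB H1.
  destruct (UB_le lam beta 1 ltac:(lra) ltac:(lra) ltac:(lra)) as [_ HU].
  assert (Hn : lam <= nn lam beta) by (apply nn_pos; lra).
  assert (Hg := gg_ge0 lam beta ltac:(lra) ltac:(lra)).
  assert (HG := G1_ge _ (aa_ge0 lam beta)).
  assert (Hh := exp_half).
  assert (Hr : 0 < lam / nn lam beta) by (apply Rdiv_lt_0_compat; lra).
  assert (Hsq := gg_sq lam beta ltac:(lra) ltac:(lra)).
  set (s := sqrt lam) in *.
  assert (Hs2 : s * s = lam) by (apply sqrt_sqrt; lra).
  assert (Hs1 : 1 <= s) by (unfold s; rewrite <- sqrt_1; apply sqrt_le_1; lra).
  assert (Hnn : nn lam beta = s * s + beta * s) by (unfold nn; fold s; lra).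
  set (g := gg lam beta) in *.
  assert (Hg2 : beta / 2 <= g ^ 2).
  { assert (beta / 2 * nn lam beta <= g ^ 2 * nn lam beta).
    { rewrite Hsq, Hnn, <- Hs2. assert (0 <= s * ((beta - 1) * s + beta * (s - 1))) by
       (apply Rmult_le_pos; nra). nra. }
    apply Rmult_le_reg_r with (nn lam beta); lra. }
  assert (Hg3 : 3 / eps <= g).
  { assert (9 / eps ^ 2 <= g ^ 2).
    { assert (9 / eps ^ 2 <= beta / 2); [|lra].
      unfold Rdiv in *. nra. }
    apply Rsqr_incr_0_var; [|auto]. unfold Rsqr. replace ((3 / eps) * (3/eps)) with (9 / eps^2) by (field; lra).
    nra. }
  assert (Hgp : 0 < g). { assert (0 < 3 / eps) by (apply Rdiv_lt_0_compat; lra). lra. }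
  eapply Rle_trans; [exact HU|].
  assert (g / 3 <= lam / nn lam beta + g * G (aa lam beta) 1) by nra.
  eapply Rle_trans. apply Rinv_le_contravar; [|exact H]. lra.
  replace eps with (/ (/ eps)) by (field; lra). apply Rinv_le_contravar.
  apply Rinv_0_lt_compat; lra.
  unfold Rdiv in *. lra.
Qed.

Lemma G_le_max b M B : 0 <= M -> 0 <= b <= B -> G b M <= M * exp (B * M).
Proof.
  intros HM Hb. unfold G.
  assert (RInt (E b) 0 M <= RInt (fun _ => exp (B * M)) 0 M).
  { apply RInt_le2; auto. intros; apply contE. intros; apply continuous_const.
    intros x Hx. unfold E. apply exp_mono. nra. }
  rewrite RInt_const, scalR in H. lra.
Qed.

Lemma G_shift a b d M : 0 <= M -> 0 <= d -> b - d <= a -> exp (- (d * M)) * G b M <= G a M.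
Proof.
  intros HM Hd Ha. unfold G. rewrite <- RInt_scal'; auto; [|intros; apply contE].
  apply RInt_le2; auto. intros; apply (continuous_scal_r (K:=R_AbsRing) (V:=R_NormedModule)); apply contE.
  intros; apply contE.
  intros x Hx. unfold E. rewrite <- exp_plus. apply exp_mono. nra.
Qed.

Lemma exp_neg_lb x : 1 - x <= exp (- x).
Proof. assert (H := exp_ineq1_le (- x)). lra. Qed.

Lemma aa_lb lam beta : 1 <= lam -> 0 <= beta -> beta <= sqrt lam ->
  beta - sqrt (beta ^ 3 / sqrt lam) <= aa lam beta.
Proof.
  intros Hl Hb Hbs.
  set (s := sqrt lam) in *.
  assert (Hs2 : s * s = lam) by (apply sqrt_sqrt; lra).
  assert (Hs1 : 1 <= s) by (unfold s; rewrite <- sqrt_1; apply sqrt_le_1; lra).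
  assert (Hnn : nn lam beta = s * s + beta * s) by (unfold nn; fold s; lra).
  set (x := beta / s).
  assert (Hx : 0 <= x) by (apply Rmult_le_pos; auto; left; apply Rinv_0_lt_compat; lra).
  assert (Hln : ln (lam / nn lam beta) = - ln (1 + x)).
  { rewrite <- ln_Rinv. f_equal. rewrite Hnn, <- Hs2. unfold x. field. split; nra.
    lra. }
  assert (Harg : beta ^ 2 - beta ^ 3 / s <=
     - 2 * nn lam beta * (1 - lam / nn lam beta + ln (lam / nn lam beta))).
  { rewrite Hln. assert (H := ln_lb x Hx).
    replace (- 2 * nn lam beta * (1 - lam / nn lam beta + - ln (1 + x))) with
      (- 2 * beta * s + 2 * nn lam beta * ln (1 + x)).
    2:{ rewrite Hnn, <- Hs2. field. nra. }
    assert (2 * nn lam beta * (x - x^2/2) <= 2 * nn lam beta * ln (1 + x)).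
    { apply Rmult_le_compat_l; auto. rewrite Hnn; nra. }
    assert (2 * nn lam beta * (x - x^2/2) = 2 * beta * s + beta ^ 2 - beta ^ 3 / s).
    { rewrite Hnn. unfold x. field. lra. }
    lra. }
  assert (Hw0 : 0 <= beta ^ 2 - beta ^ 3 / s).
  { replace (beta ^ 2 - beta ^ 3 / s) with (beta ^ 2 * (s - beta) / s) by (field; lra).
    apply Rmult_le_pos. apply Rmult_le_pos; nra. left; apply Rinv_0_lt_compat; lra. }
  set (w := sqrt (beta ^ 2 - beta ^ 3 / s)).
  assert (Hw : w <= aa lam beta) by (apply sqrt_le_1; auto; lra).
  assert (Hww : w * w = beta ^ 2 - beta ^ 3 / s) by (apply sqrt_sqrt; auto).
  assert (Hwp : 0 <= w) by apply sqrt_pos.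
  assert (H3 : 0 <= beta ^ 3 / s) by (apply Rmult_le_pos; [nra| left; apply Rinv_0_lt_compat; lra]).
  assert (Hwb2 : w * w <= beta * beta) by (rewrite Hww; lra).
  assert (Hwb : w <= beta) by nra.
  assert (Hd : beta - w <= sqrt (beta ^ 3 / s)).
  {
    rewrite <- (sqrt_pow2 (beta - w)) by lra. apply sqrt_le_1; try nra. }
  lra.
Qed.

Definition eta2 s B M := B / s + (B * sqrt (B ^ 3 / s) * M + B ^ 2 / s) * (M * exp (B * M)).

Lemma Y_lb lam beta M B : 1 <= lam -> 0 <= beta -> beta <= B -> B <= sqrt lam -> 0 <= M ->
  1 + beta * G beta M - eta2 (sqrt lam) B M <=
  lam / nn lam beta + gg lam beta * G (aa lam beta) M.
Proof.
  intros Hl Hb HbB HBs HM.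
  assert (Ha := aa_lb lam beta Hl Hb ltac:(lra)).
  set (s := sqrt lam) in *.
  assert (Hs2 : s * s = lam) by (apply sqrt_sqrt; lra).
  assert (Hs1 : 1 <= s) by (unfold s; rewrite <- sqrt_1; apply sqrt_le_1; lra).
  assert (Hnn : nn lam beta = s * s + beta * s) by (unfold nn; fold s; lra).
  set (d := sqrt (B ^ 3 / s)).
  assert (Hd0 : 0 <= d) by apply sqrt_pos.
  assert (Hd : sqrt (beta ^ 3 / s) <= d).
  { apply sqrt_le_1_alt. unfold Rdiv. apply Rmult_le_compat_r.
    left; apply Rinv_0_lt_compat; lra. apply pow_incr; lra. }
  assert (Hrho : 1 - B / s <= lam / nn lam beta).
  { rewrite Hnn, <- Hs2. replace (s * s / (s * s + beta * s)) with (1 - beta / (s + beta)) by (field; repeat split; nra).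
    assert (beta / (s + beta) <= B / s); [|lra].
    unfold Rdiv. apply Rmult_le_compat; auto. left; apply Rinv_0_lt_compat; lra.
    apply Rinv_le_contravar; lra. }
  assert (Hgam : beta - B ^ 2 / s <= gg lam beta).
  { unfold gg. rewrite Hnn. replace (s * s + beta * s - lam) with (beta * s) by lra.
    assert (Hq : sqrt (s * s + beta * s) <= s + beta).
    { rewrite <- (sqrt_pow2 (s + beta)) by lra. apply sqrt_le_1; nra. }
    assert (Hq0 : 0 < sqrt (s * s + beta * s)) by (apply sqrt_pos'; nra).
    assert (beta * s / (s + beta) <= beta * s / sqrt (s * s + beta * s)).
    { unfold Rdiv. apply Rmult_le_compat_l. nra. apply Rinv_le_contravar; lra. }
    assert (beta - B ^ 2 / s <= beta * s / (s + beta)); [|lra].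
    replace (beta * s / (s + beta)) with (beta - beta ^ 2 / (s + beta)) by (field; lra).
    assert (beta ^ 2 / (s + beta) <= B ^ 2 / s); [|lra].
    unfold Rdiv. apply Rmult_le_compat. nra. left; apply Rinv_0_lt_compat; lra.
    apply pow_incr; lra. apply Rinv_le_contravar; lra. }
  assert (HG1 := G_shift (aa lam beta) beta d M HM Hd0 ltac:(lra)).
  assert (HGm := G_le_max beta M B HM ltac:(lra)).
  assert (HG0 := G_ge0 beta M HM).
  assert (Hg0 := gg_ge0 lam beta ltac:(lra) Hb).
  assert (Hexp := exp_neg_lb (d * M)).
  assert (Hexp1 : exp (- (d * M)) <= 1).
  { rewrite <- exp_0. apply exp_mono. nra. }
  assert (Hexp0 := exp_pos (- (d * M))).
  set (X := exp (- (d * M)) * G beta M) in *.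
  assert (HX0 : 0 <= X) by (unfold X; nra).
  assert (HXG : X <= G beta M) by (unfold X; nra).
  assert (HgX : gg lam beta * X <= gg lam beta * G (aa lam beta) M) by (apply Rmult_le_compat_l; auto).
  assert (H1 : (beta - B ^ 2 / s) * X <= gg lam beta * X) by (apply Rmult_le_compat_r; auto).
  assert (HB2 : 0 <= B ^ 2 / s) by (apply Rmult_le_pos; [nra|left; apply Rinv_0_lt_compat; lra]).
  assert (H2 : B ^ 2 / s * X <= B ^ 2 / s * (M * exp (B * M))) by (apply Rmult_le_compat_l; lra).
  assert (H3 : beta * G beta M - beta * X <= B * d * M * (M * exp (B * M))).
  { unfold X. replace (beta * G beta M - beta * (exp (- (d * M)) * G beta M)) with
      (beta * (1 - exp (- (d * M))) * G beta M) by ring.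
    assert (0 <= 1 - exp (- (d * M)) <= d * M) by lra.
    assert (beta * (1 - exp (- (d * M))) <= B * (d * M)) by (apply Rmult_le_compat; lra).
    replace (B * d * M * (M * exp (B * M))) with (B * (d * M) * (M * exp (B * M))) by ring.
    apply Rmult_le_compat; try lra. apply Rmult_le_pos; lra. }
  unfold eta2. fold d. lra.
Qed.

Lemma erl_cont n lam t : -1 < t -> continuous (erlang_integrand n lam) t.
Proof. intros. unfold erlang_integrand, Rpower. cont_tac. lra. Qed.

Lemma erl_nonneg n lam t : 0 <= t -> 0 <= erlang_integrand n lam t.
Proof.
  intros. unfold erlang_integrand, Rpower.
  apply Rmult_le_pos. apply Rmult_le_pos; auto. left; apply exp_pos. left; apply exp_pos.
Qed.

Definition kk n lam s u := s * erlang_integrand n lam (u / s).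

Lemma pos_div s u : 1 <= s -> 0 <= u -> 0 < 1 + u * / s.
Proof. intros. assert (0 <= u * / s) by (apply Rmult_le_pos; auto; left; apply Rinv_0_lt_compat; lra). lra. Qed.

Lemma kk_cont n lam s u : 1 <= s -> 0 <= u -> continuous (kk n lam s) u.
Proof.
  intros. unfold kk, erlang_integrand, Rpower. cont_tac. apply pos_div; auto.
Qed.

Lemma kk_nonneg n lam s u : 1 <= s -> 0 <= u -> 0 <= kk n lam s u.
Proof.
  intros. unfold kk. apply Rmult_le_pos. lra. apply erl_nonneg.
  apply Rmult_le_pos; auto; left; apply Rinv_0_lt_compat; lra.
Qed.

Lemma subst_erl n lam b : 1 <= lam -> 0 <= b ->
  lam * RInt (erlang_integrand n lam) 0 b = RInt (kk n lam (sqrt lam)) 0 (sqrt lam * b).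
Proof.
  intros Hl Hb. set (s := sqrt lam).
  assert (Hs2 : s * s = lam) by (apply sqrt_sqrt; lra).
  assert (Hs1 : 1 <= s) by (unfold s; rewrite <- sqrt_1; apply sqrt_le_1; lra).
  assert (Hcl := RInt_comp_lin (V:=R_CompleteNormedModule) (erlang_integrand n lam) (/ s) 0 0 (s * b)).
  replace (/ s * 0 + 0) with 0 in Hcl by ring.
  replace (/ s * (s * b) + 0) with b in Hcl by (field; lra).
  specialize (Hcl ltac:(apply exR; auto; intros; apply erl_cont; lra)).
  assert (Hc : forall x, 0 <= x <= s * b -> continuous (fun y => erlang_integrand n lam (y / s)) x).
  { intros x Hx. unfold erlang_integrand, Rpower. cont_tac. apply pos_div; lra. }
  assert (H1 : RInt (fun y => scal (/ s) (erlang_integrand n lam (/ s * y + 0))) 0 (s * b)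
     = / s * RInt (fun y => erlang_integrand n lam (y / s)) 0 (s * b)).
  { rewrite <- RInt_scal'; auto; try nra. apply RInt_ext. intros x _. rewrite scalR.
    f_equal. f_equal. field. lra. }
  assert (H2 : RInt (kk n lam s) 0 (s * b) = s * RInt (fun y => erlang_integrand n lam (y / s)) 0 (s * b)).
  { unfold kk. rewrite RInt_scal'; auto; nra. }
  assert (H3 : RInt (erlang_integrand n lam) 0 b = / s * RInt (fun y => erlang_integrand n lam (y / s)) 0 (s * b)).
  { rewrite <- H1. symmetry. exact Hcl. }
  rewrite H2, H3, <- Hs2. field. lra.
Qed.

Lemma kk_exp n lam s u : 1 <= s -> lam = s * s -> 0 <= u ->
  kk n lam s u <= u * exp (- s * u + n * ln (1 + u / s)).
Proof.
  intros Hs Hl Hu. unfold kk, erlang_integrand, Rpower.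
  assert (Hln : 0 <= ln (1 + u / s)).
  { apply ln1_ge0. apply Rmult_le_pos; auto; left; apply Rinv_0_lt_compat; lra. }
  replace (s * (u / s * exp (- lam * (u / s)) * exp ((n - 1) * ln (1 + u / s))))
    with (u * exp (- s * u + (n - 1) * ln (1 + u / s))).
  2:{ rewrite exp_plus. subst lam. replace (- (s * s) * (u / s)) with (- s * u) by (field; lra). field. lra. }
  apply Rmult_le_compat_l; auto. apply exp_mono. nra.
Qed.

Lemma kk_core n lam s u beta B M : 1 <= s -> lam = s * s -> n = s * s + beta * s ->
  0 <= beta -> beta <= B -> 0 <= u -> u <= M ->
  kk n lam s u <= exp ((1 + B) * M ^ 3 / (3 * s)) * (u * E beta u).
Proof.
  intros Hs Hl Hn Hb HbB Hu HuM.
  eapply Rle_trans; [apply kk_exp; auto|].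
  assert (Ht : 0 <= u / s) by (apply Rmult_le_pos; auto; left; apply Rinv_0_lt_compat; lra).
  assert (H := ln_ub2 (u / s) Ht).
  unfold E. rewrite <- Rmult_assoc, (Rmult_comm (exp _) u), Rmult_assoc, <- exp_plus.
  apply Rmult_le_compat_l; auto. apply exp_mono.
  assert (Hn0 : 0 <= n) by nra.
  assert (n * ln (1 + u / s) <= n * (u / s - (u / s) ^ 2 / 2 + (u / s) ^ 3 / 3))
    by (apply Rmult_le_compat_l; auto).
  assert (Heq : n * (u / s - (u / s) ^ 2 / 2 + (u / s) ^ 3 / 3) =
     s * u + beta * u - u ^ 2 / 2 - beta * u ^ 2 / (2 * s) + u ^ 3 / (3 * s) + beta * u ^ 3 / (3 * s ^ 2)).
  { rewrite Hn. field. lra. }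
  assert (0 <= beta * u ^ 2 / (2 * s)).
  { apply Rmult_le_pos. apply Rmult_le_pos; nra. left; apply Rinv_0_lt_compat; lra. }
  assert (Hu3 : u ^ 3 <= M ^ 3) by (apply pow_incr; lra).
  assert (u ^ 3 / (3 * s) + beta * u ^ 3 / (3 * s ^ 2) <= (1 + B) * M ^ 3 / (3 * s)).
  { replace (u ^ 3 / (3 * s) + beta * u ^ 3 / (3 * s ^ 2)) with ((1 + beta / s) * u ^ 3 / (3 * s))
      by (field; lra).
    unfold Rdiv. apply Rmult_le_compat_r. left; apply Rinv_0_lt_compat; lra.
    apply Rmult_le_compat; try nra.
    assert (0 <= beta * / s) by (apply Rmult_le_pos; auto; left; apply Rinv_0_lt_compat; lra). lra.
    assert (beta * / s <= B). { apply Rle_trans with (beta * 1). apply Rmult_le_compat_l; auto.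
      rewrite <- Rinv_1. apply Rinv_le_contravar; lra. lra. }
    lra. }
  lra.
Qed.

Lemma kk_tail n lam s u beta B M : 1 <= s -> lam = s * s -> n = s * s + beta * s ->
  0 <= beta -> beta <= B -> 4 * (B + 1) <= s -> 4 * (B + 1) <= M -> M <= u ->
  kk n lam s u <= u * exp (- u).
Proof.
  intros Hs Hl Hn Hb HbB HsB HMB HuM.
  eapply Rle_trans; [apply kk_exp; auto; lra|].
  assert (Ht : 0 <= u / s) by (apply Rmult_le_pos; lra || (left; apply Rinv_0_lt_compat; lra)).
  assert (H := ln_ub1 (u / s) Ht).
  apply Rmult_le_compat_l; [lra|]. apply exp_mono.
  assert (Hn0 : 0 <= n) by nra.
  assert (n * ln (1 + u / s) <= n * (u / s - (u / s) ^ 2 / (2 * (1 + u / s))))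
    by (apply Rmult_le_compat_l; auto).
  assert (Heq : n * (u / s - (u / s) ^ 2 / (2 * (1 + u / s))) =
     s * u + beta * u - (s + beta) * u ^ 2 / (2 * (s + u))).
  { rewrite Hn. field. lra. }
  assert ((beta + 1) * u <= (s + beta) * u ^ 2 / (2 * (s + u))).
  { apply (Rmult_le_reg_r (2 * (s + u))). lra.
    replace ((s + beta) * u ^ 2 / (2 * (s + u)) * (2 * (s + u))) with ((s + beta) * u ^ 2) by (field; lra).
    assert (Hsu : s * u >= 2 * (B + 1) * (s + u)) by nra.
    assert (H1 : u * (s * u) >= u * (2 * (B + 1) * (s + u))) by (apply Rmult_ge_compat_l; lra).
    assert (H2 : (B - beta) * (2 * (s + u) * u) >= 0) by (apply Rle_ge, Rmult_le_pos; nra).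
    assert (H3 : beta * u ^ 2 >= 0) by (apply Rle_ge, Rmult_le_pos; nra).
    assert (Hx : (s + beta) * u ^ 2 = u * (s * u) + beta * u ^ 2) by ring.
    lra. }
  lra.
Qed.

Lemma RInt_add (f g : R -> R) a b : a <= b ->
  (forall x, a <= x <= b -> continuous f x) -> (forall x, a <= x <= b -> continuous g x) ->
  RInt (fun x => f x + g x) a b = RInt f a b + RInt g a b.
Proof.
  intros Hab Hf Hg. exact (RInt_plus (V:=R_CompleteNormedModule) f g a b (exR f a b Hab Hf) (exR g a b Hab Hg)).
Qed.

Lemma uE_int b M : 0 <= M -> RInt (fun u => u * E b u) 0 M = 1 - E b M + b * G b M.
Proof.
  intros HM.
  assert (H1 : RInt (fun u => (u - b) * E b u) 0 M = 1 - E b M).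
  { rewrite (RInt_deriv (fun u => - E b u)); auto.
    assert (HE0 : E b 0 = 1). { unfold E. replace (b * 0 - 0 ^ 2 / 2) with 0 by field. apply exp_0. }
    rewrite HE0. lra.
    intros x Hx. unfold E. auto_derive. auto. replace (b * x + - (x * (x * 1) * / 2)) with (b * x - x ^ 2 / 2) by field. field.
    intros x Hx. unfold E. cont_tac. auto. }
  unfold G. rewrite <- RInt_scal'; auto; [|intros; apply contE].
  rewrite <- H1.
  assert (RInt (fun u => u * E b u) 0 M = RInt (fun u => (u - b) * E b u + b * E b u) 0 M).
  { apply RInt_ext. intros x _. change (x * E b x = (x - b) * E b x + b * E b x). ring. }
  rewrite H, RInt_add; auto.
  intros. unfold E. cont_tac. auto.
  intros. unfold E. cont_tac. auto.
Qed.

Lemma ue_tail M c : 0 <= M -> M <= c -> RInt (fun u => u * exp (- u)) M c <= (M + 1) * exp (- M).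
Proof.
  intros HM Hc.
  rewrite (RInt_deriv (fun u => - ((u + 1) * exp (- u)))); auto.
  assert (0 < (c + 1) * exp (- c)) by (apply Rmult_lt_0_compat; [lra|apply exp_pos]). lra.
  intros x Hx. auto_derive. auto. ring.
  intros x Hx. cont_tac. auto.
Qed.

Definition eta1 s B M := (1 + B) * M ^ 3 / (3 * s).

Lemma kk_int n lam s beta B M c : 1 <= s -> lam = s * s -> n = s * s + beta * s ->
  0 <= beta -> beta <= B -> 4 * (B + 1) <= s -> 4 * (B + 1) <= M -> 0 <= c ->
  RInt (kk n lam s) 0 c <= exp (eta1 s B M) * (1 + beta * G beta M) + (M + 1) * exp (- M).
Proof.
  intros Hs Hl Hn Hb HbB HsB HMB Hc.
  assert (HM0 : 0 <= M) by lra.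
  set (c' := Rmax c M).
  assert (Hcc : c <= c') by apply Rmax_l. assert (HMc : M <= c') by apply Rmax_r.
  assert (Hk : forall x, 0 <= x -> continuous (kk n lam s) x) by (intros; apply kk_cont; auto).
  assert (H1 : RInt (kk n lam s) 0 c <= RInt (kk n lam s) 0 c').
  { rewrite (RInt_split _ 0 c c'); auto. 
    assert (0 <= RInt (kk n lam s) c c'). { apply RInt_ge0'; auto. intros; apply Hk; lra.
      intros; apply kk_nonneg; lra. } lra.
    intros; apply Hk; lra. }
  rewrite (RInt_split _ 0 M c') in H1; auto; [|intros; apply Hk; lra].
  assert (H2 : RInt (kk n lam s) 0 M <= RInt (fun u => exp (eta1 s B M) * (u * E beta u)) 0 M).
  { apply RInt_le2; auto. intros; apply Hk; lra.
    intros. cont_tac. auto. unfold E; auto_derive; auto.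
    intros x Hx. unfold eta1. apply (kk_core n lam s x beta B M); auto; lra. }
  rewrite RInt_scal', uE_int in H2; auto.
  2:{ intros. unfold E. cont_tac. auto. }
  assert (H3 : RInt (kk n lam s) M c' <= RInt (fun u => u * exp (- u)) M c').
  { apply RInt_le2; auto. intros; apply Hk; lra. intros; cont_tac; auto.
    intros x Hx. apply (kk_tail n lam s x beta B M); auto; lra. }
  assert (H4 := ue_tail M c' HM0 HMc).
  assert (0 < E beta M) by apply E_pos.
  assert (0 < exp (eta1 s B M)) by apply exp_pos.
  assert (exp (eta1 s B M) * (1 - E beta M + beta * G beta M) <= exp (eta1 s B M) * (1 + beta * G beta M))
    by (apply Rmult_le_compat_l; lra).
  lra.
Qed.

Lemma ln_le_xm1 x : 0 < x -> ln x <= x - 1.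
Proof.
  intros Hx. rewrite <- (ln_exp (x - 1)).
  destruct (Req_dec x (exp (x - 1))) as [E0|E0]. rewrite <- E0; lra.
  left. apply ln_increasing; auto. assert (H := exp_ineq1_le (x - 1)). lra.
Qed.

Definition II lam beta := int_a_infty (erlang_integrand (nn lam beta) lam) 0.

Lemma erl_gen_bound n lam t : 0 < lam -> 1 <= n -> 0 <= t ->
  erlang_integrand n lam t <=
  exp ((n - 1) * ln ((2 * (n - 1) + 1) / lam) + lam / 2) * (t * exp (- (lam / 2) * t)).
Proof.
  intros Hl Hn Ht. unfold erlang_integrand, Rpower.
  set (a := n - 1). set (k := (2 * a + 1) / lam).
  assert (Hk : 0 < k) by (unfold k; apply Rdiv_lt_0_compat; unfold a; lra).
  assert (Hln : ln (1 + t) <= ln k + (1 + t) / k - 1).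
  { replace (ln (1 + t)) with (ln k + ln ((1 + t) / k)).
    assert (H := ln_le_xm1 ((1 + t) / k) ltac:(apply Rdiv_lt_0_compat; lra)). lra.
    rewrite <- ln_mult; try lra. f_equal. field. lra. apply Rdiv_lt_0_compat; lra. }
  assert (Ha : 0 <= a) by (unfold a; lra).
  assert (H1 : a * ln (1 + t) <= a * ln k + lam / 2 + lam / 2 * t).
  { assert (a * ln (1 + t) <= a * (ln k + (1 + t) / k - 1)) by (apply Rmult_le_compat_l; auto).
    assert (a * ((1 + t) / k) <= lam / 2 * (1 + t)).
    { unfold k. replace (a * ((1 + t) / ((2 * a + 1) / lam))) with (lam * (1 + t) * (a / (2 * a + 1)))
        by (field; lra).
      replace (lam / 2 * (1 + t)) with (lam * (1 + t) * / 2) by field.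
      apply Rmult_le_compat_l. nra.
      apply (Rmult_le_reg_r (2 * a + 1)). lra. field_simplify; lra. }
    nra. }
  replace (t * exp (- lam * t) * exp (a * ln (1 + t))) with (t * exp (- lam * t + a * ln (1 + t)))
    by (rewrite exp_plus; ring).
  replace (exp (a * ln k + lam / 2) * (t * exp (- (lam / 2) * t))) with
    (t * exp (a * ln k + lam / 2 + - (lam / 2) * t)) by (rewrite exp_plus; ring).
  apply Rmult_le_compat_l; auto. apply exp_mono. lra.
Qed.

Lemma te_int lam b : 0 < lam -> 0 <= b -> RInt (fun t => t * exp (- (lam / 2) * t)) 0 b <= 4 / lam ^ 2.
Proof.
  intros Hl Hb.
  rewrite (RInt_deriv (fun t => - (2 * t / lam + 4 / lam ^ 2) * exp (- (lam / 2) * t))); auto.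
  replace (- (lam / 2) * 0) with 0 by ring. rewrite exp_0.
  assert (0 <= (2 * b / lam + 4 / lam ^ 2) * exp (- (lam / 2) * b)).
  { apply Rmult_le_pos. assert (0 <= 2 * b / lam) by (apply Rdiv_le_0_compat; lra).
    assert (0 < 4 / lam ^ 2) by (apply Rdiv_lt_0_compat; nra). lra. left; apply exp_pos. }
  replace (- (2 * 0 / lam + 4 / lam ^ 2) * 1) with (- (4 / lam ^ 2)) by (field; lra). lra.
  intros x Hx. auto_derive. auto. field. lra.
  intros x Hx. cont_tac. auto.
Qed.

Lemma II_props lam beta : 1 <= lam -> 0 <= beta ->
  (forall b, 0 <= b -> RInt (erlang_integrand (nn lam beta) lam) 0 b <= II lam beta) /\
  (forall K, (forall b, 0 <= b -> RInt (erlang_integrand (nn lam beta) lam) 0 b <= K) -> II lam beta <= K).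
Proof.
  intros Hl Hb.
  assert (Hn : lam <= nn lam beta) by (apply nn_pos; lra).
  set (n := nn lam beta) in *.
  set (C := exp ((n - 1) * ln ((2 * (n - 1) + 1) / lam) + lam / 2)).
  assert (HC : 0 < C) by apply exp_pos.
  assert (Hc : forall x, 0 <= x -> continuous (erlang_integrand n lam) x) by (intros; apply erl_cont; lra).
  assert (Hp : forall x, 0 <= x -> 0 <= erlang_integrand n lam x) by (intros; apply erl_nonneg; lra).
  assert (HK : forall b, 0 <= b -> RInt (erlang_integrand n lam) 0 b <= C * (4 / lam ^ 2)).
  { intros b Hb0.
    eapply Rle_trans. apply (RInt_le2 _ (fun t => C * (t * exp (- (lam / 2) * t)))); auto.
    intros; apply Hc; lra. intros; cont_tac; auto.
    intros x Hx. apply erl_gen_bound; lra.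
    rewrite RInt_scal'; auto. apply Rmult_le_compat_l. lra. apply te_int; lra.
    intros; cont_tac; auto. }
  destruct (int_up _ 0 _ Hc Hp HK) as [H1 _].
  split. exact H1.
  intros K HK'. destruct (int_up _ 0 _ Hc Hp HK') as [_ H2]. exact H2.
Qed.

Lemma II_pos lam beta : 1 <= lam -> 0 <= beta -> 0 < lam * II lam beta.
Proof.
  intros Hl Hb. destruct (II_props lam beta Hl Hb) as [H1 _].
  assert (Hn : lam <= nn lam beta) by (apply nn_pos; lra).
  assert (H := H1 1 ltac:(lra)).
  assert (RInt (fun t => exp (- lam) * t) 0 1 <= RInt (erlang_integrand (nn lam beta) lam) 0 1).
  { apply RInt_le2. lra. intros; cont_tac; auto. intros; apply erl_cont; lra.
    intros x Hx. unfold erlang_integrand, Rpower.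
    assert (exp (- lam) <= exp (- lam * x)) by (apply exp_mono; nra).
    assert (1 <= exp ((nn lam beta - 1) * ln (1 + x))).
    { apply Rle_trans with (exp 0). rewrite exp_0; lra. apply exp_mono. apply Rmult_le_pos. lra. apply ln1_ge0; lra. }
    assert (0 < exp (- lam)) by apply exp_pos.
    set (P := exp ((nn lam beta - 1) * ln (1 + x))) in *.
    assert (exp (- lam) * x <= x * exp (- lam * x)) by nra.
    assert (0 <= x * exp (- lam * x)) by (apply Rmult_le_pos; [lra|left; apply exp_pos]).
    assert (x * exp (- lam * x) <= x * exp (- lam * x) * P) by nra.
    lra. }
  rewrite (RInt_deriv (fun t => exp (- lam) * t ^ 2 / 2)) in H0.
  2: lra. 2:{ intros x Hx. auto_derive. auto. field. }
  2:{ intros; cont_tac; auto. }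
  assert (0 < exp (- lam)) by apply exp_pos.
  apply Rmult_lt_0_compat. lra. nra.
Qed.

Lemma lamI_ub lam beta B M : 1 <= lam -> 0 <= beta -> beta <= B -> 4 * (B + 1) <= sqrt lam ->
  4 * (B + 1) <= M ->
  lam * II lam beta <= exp (eta1 (sqrt lam) B M) * (1 + beta * G beta M) + (M + 1) * exp (- M).
Proof.
  intros Hl Hb HbB Hs HM.
  set (P := exp (eta1 (sqrt lam) B M) * (1 + beta * G beta M) + (M + 1) * exp (- M)).
  destruct (II_props lam beta Hl Hb) as [_ H2].
  assert (II lam beta <= P / lam).
  { apply H2. intros b Hb0. apply (Rmult_le_reg_l lam). lra.
    replace (lam * (P / lam)) with P by (field; lra).
    rewrite subst_erl; auto.
    assert (Hs2 : sqrt lam * sqrt lam = lam) by (apply sqrt_sqrt; lra).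
    apply (kk_int _ _ _ beta B M); auto; try lra.
    unfold nn. lra. apply Rmult_le_pos; lra. }
  apply (Rmult_le_compat_l lam) in H; [|lra].
  replace (lam * (P / lam)) with P in H by (field; lra). exact H.
Qed.

Lemma at_eq lam beta : alpha_tilde beta lam = Rmin 1 (/ (lam * II lam beta)).
Proof. reflexivity. Qed.

Lemma at_range lam beta : 1 <= lam -> 0 <= beta -> 0 < alpha_tilde beta lam <= 1.
Proof.
  intros Hl Hb. rewrite at_eq. assert (H := II_pos lam beta Hl Hb).
  split. apply Rmin_glb_lt. lra. apply Rinv_0_lt_compat; auto. apply Rmin_l.
Qed.

Lemma at_lb lam beta P : 1 <= lam -> 0 <= beta -> lam * II lam beta <= P -> 1 <= P ->
  / P <= alpha_tilde beta lam.
Proof.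
  intros Hl Hb HP H1. rewrite at_eq. assert (H := II_pos lam beta Hl Hb).
  apply Rmin_glb. rewrite <- Rinv_1. apply Rinv_le_contravar; lra.
  apply Rinv_le_contravar; lra.
Qed.

Lemma div_small c t s : 0 < t -> 0 <= c -> 0 < s -> c / t <= s -> c / s <= t.
Proof.
  intros Ht Hc Hs H. apply (Rmult_le_reg_r s); auto. unfold Rdiv. rewrite Rmult_assoc, Rinv_l by lra.
  apply (Rmult_le_compat_r t) in H; [|lra]. unfold Rdiv in H. rewrite Rmult_assoc, Rinv_l in H by lra. lra.
Qed.

Lemma tail_small M : 0 < M -> (M + 1) * exp (- M) <= 4 / M.
Proof.
  intros HM. assert (H := exp_ineq1_le (M / 2)).
  assert (Hm : exp M = exp (M / 2) * exp (M / 2)) by (rewrite <- exp_plus; f_equal; field).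
  assert (He : (1 + M / 2) * (1 + M / 2) <= exp M) by (rewrite Hm; apply Rmult_le_compat; lra).
  rewrite exp_Ropp. apply (Rmult_le_reg_r (exp M)). apply exp_pos.
  rewrite Rmult_assoc, Rinv_l by (apply Rgt_not_eq, exp_pos). rewrite Rmult_1_r.
  apply Rle_trans with (4 / M * ((1 + M / 2) * (1 + M / 2))).
  - apply (Rmult_le_reg_r M); auto. field_simplify; nra.
  - apply Rmult_le_compat_l; auto. apply Rlt_le, Rdiv_lt_0_compat; lra.
Qed.

Lemma exp_small e : 0 <= e -> e <= / 2 -> exp e - 1 <= 2 * e.
Proof.
  intros H1 H2. assert (H := exp_neg_lb e).
  assert (Hp : exp e * exp (- e) = 1) by (rewrite <- exp_plus; replace (e + - e) with 0 by ring; apply exp_0).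
  assert (0 < exp e) by apply exp_pos. nra.
Qed.

Lemma coord_bound eps : 0 < eps -> exists Lam, 1 <= Lam /\
  forall lam beta, Lam <= lam -> 0 <= beta -> UB beta lam - alpha_tilde beta lam <= eps.
Proof.
  intros He.
  set (B := 18 / eps ^ 2 + 1).
  assert (HB1 : 1 <= B). { unfold B. assert (0 < 18 / eps ^ 2) by (apply Rdiv_lt_0_compat; nra). lra. }
  set (M := Rmax (4 * (B + 1)) (32 / eps)).
  assert (HM1 : 4 * (B + 1) <= M) by apply Rmax_l.
  assert (HM2 : 32 / eps <= M) by apply Rmax_r.
  assert (HM0 : 0 < M) by lra.
  set (Q := M * exp (B * M)).
  assert (HQ : 0 < Q) by (apply Rmult_lt_0_compat; auto; apply exp_pos).
  set (Amax := 1 + B * Q).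
  assert (HA1 : 1 <= Amax) by (unfold Amax; nra).
  set (eta0 := Rmin (/ 2) (eps / (16 * Amax))).
  assert (Heta0 : 0 < eta0). { apply Rmin_glb_lt. lra. apply Rdiv_lt_0_compat; lra. }
  set (eta1' := Rmin (/ 2) (eps / 8)).
  assert (Heta1 : 0 < eta1'). { apply Rmin_glb_lt; lra. }
  set (d0 := eta1' / (3 * B * M * Q + 1)).
  assert (Hd0 : 0 < d0). { apply Rdiv_lt_0_compat; auto. assert (0 <= B * M * Q) by (apply Rmult_le_pos; nra). nra. }
  set (S := Rmax (Rmax (4 * (B + 1)) ((1 + B) * M ^ 3 / 3 / eta0))
                 (Rmax (B / (eta1' / 3)) (Rmax (B ^ 2 * Q / (eta1' / 3)) (B ^ 3 / d0 ^ 2)))).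
  assert (HS1 : 4 * (B + 1) <= S) by (unfold S; eapply Rle_trans; [apply Rmax_l|apply Rmax_l]).
  assert (HS2 : (1 + B) * M ^ 3 / 3 / eta0 <= S) by (unfold S; eapply Rle_trans; [apply Rmax_r|apply Rmax_l]).
  assert (HS3 : B / (eta1' / 3) <= S) by (unfold S; eapply Rle_trans; [apply Rmax_l|apply Rmax_r]).
  assert (HS4 : B ^ 2 * Q / (eta1' / 3) <= S).
  { unfold S. eapply Rle_trans; [|apply Rmax_r]. eapply Rle_trans; [|apply Rmax_r]. apply Rmax_l. }
  assert (HS5 : B ^ 3 / d0 ^ 2 <= S).
  { unfold S. eapply Rle_trans; [|apply Rmax_r]. eapply Rle_trans; [|apply Rmax_r]. apply Rmax_r. }
  exists (S * S). split. nra.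
  intros lam beta Hlam Hb.
  set (s := sqrt lam).
  assert (Hs : S <= s).
  { unfold s. rewrite <- (sqrt_square S) by lra. apply sqrt_le_1; nra. }
  assert (Hl1 : 1 <= lam) by nra.
  assert (Hat := at_range lam beta Hl1 Hb).
  destruct (Rle_lt_dec beta B) as [HbB|HbB].
  2:{ assert (UB beta lam <= eps). { assert (18 / eps ^ 2 <= B) by (unfold B; lra). apply UB_bigbeta; auto; lra. } lra. }
  set (A := 1 + beta * G beta M).
  assert (HGm := G_le_max beta M B ltac:(lra) ltac:(lra)). fold Q in HGm.
  assert (HG0 := G_ge0 beta M ltac:(lra)).
  assert (HA : 1 <= A <= Amax). { unfold A, Amax. split. nra. apply Rplus_le_compat_l. apply Rmult_le_compat; lra. }
  set (eta := eta1 s B M).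
  assert (Heta : 0 <= eta <= eta0).
  { unfold eta, eta1. split. apply Rmult_le_pos. apply Rmult_le_pos; [lra|]. apply pow_le; lra.
    left; apply Rinv_0_lt_compat; lra.
    replace ((1 + B) * M ^ 3 / (3 * s)) with (((1 + B) * M ^ 3 / 3) / s) by (field; lra).
    apply div_small; auto; try lra. apply Rmult_le_pos; [|lra]. apply Rmult_le_pos; [lra|]. apply pow_le; lra. }
  set (tau := (M + 1) * exp (- M)).
  assert (Htau : 0 <= tau <= eps / 8).
  { split. apply Rmult_le_pos; [lra|left; apply exp_pos].
    eapply Rle_trans. apply tail_small; auto.
    apply (div_small 4 (eps / 8) M); try lra. replace (4 / (eps / 8)) with (32 / eps) by (field; lra). lra. }
  set (P := exp eta * A + tau).
  assert (Hee : 1 <= exp eta) by (rewrite <- exp_0; apply exp_mono; lra).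
  assert (HP1 : 1 <= P) by (unfold P; nra).
  assert (HI := lamI_ub lam beta B M Hl1 Hb HbB ltac:(fold s; lra) HM1).
  fold s eta A tau P in HI.
  assert (Hal := at_lb lam beta P Hl1 Hb HI HP1).
  assert (HY := Y_lb lam beta M B Hl1 Hb HbB ltac:(fold s; lra) ltac:(lra)).
  fold s A in HY.
  set (eta' := eta2 s B M) in HY.
  assert (Hd : sqrt (B ^ 3 / s) <= d0).
  { rewrite <- (sqrt_square d0) by lra. apply sqrt_le_1_alt.
    replace (d0 * d0) with (d0 ^ 2) by ring.
    apply div_small. apply pow_lt; auto. apply pow_le; lra. lra. lra. }
  assert (Heta' : eta' <= eta1').
  { unfold eta', eta2. fold Q.
    assert (B / s <= eta1' / 3) by (apply div_small; lra).
    assert (B ^ 2 / s * Q <= eta1' / 3).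
    { replace (B ^ 2 / s * Q) with (B ^ 2 * Q / s) by (field; lra). apply div_small; try lra.
      apply Rmult_le_pos; [apply pow_le|]; lra. }
    assert (B * sqrt (B ^ 3 / s) * M * Q <= eta1' / 3).
    { assert (0 <= sqrt (B ^ 3 / s)) by apply sqrt_pos.
      apply Rle_trans with (B * d0 * M * Q).
      repeat (apply Rmult_le_compat_r; [lra|]). apply Rmult_le_compat_l; lra.
      unfold d0. assert (0 <= B * M * Q) by (apply Rmult_le_pos; nra).
      replace (B * (eta1' / (3 * B * M * Q + 1)) * M * Q) with ((B * M * Q) * eta1' / (3 * (B * M * Q) + 1))
        by (field; nra).
      apply (Rmult_le_reg_r (3 * (B * M * Q) + 1)). lra. field_simplify; nra. }
    nra. }
  assert (Hh1 : eta1' <= / 2) by apply Rmin_l.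
  assert (Hh2 : eta1' <= eps / 8) by apply Rmin_r.
  assert (Hg1 : eta0 <= / 2) by apply Rmin_l.
  assert (Hg2 : eta0 <= eps / (16 * Amax)) by apply Rmin_r.
  destruct (UB_le lam beta M ltac:(lra) Hb ltac:(lra)) as [HU0 HU].
  set (Y := lam / nn lam beta + gg lam beta * G (aa lam beta) M) in *.
  assert (HY2 : / 2 <= Y) by lra.
  assert (HUY : UB beta lam <= / Y) by exact HU.
  assert (Hexp := exp_small eta ltac:(lra) ltac:(lra)).
  assert (HPA : P - Y <= 3 * (eps / 8)).
  { unfold P. assert ((exp eta - 1) * A <= eps / 8).
    { apply Rle_trans with ((2 * eta) * Amax). apply Rmult_le_compat; lra.
      apply Rle_trans with (2 * (eps / (16 * Amax)) * Amax). apply Rmult_le_compat_r; lra.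
      right. field. lra. }
    nra. }
  assert (/ Y - / P <= 2 * (3 * (eps / 8))).
  { replace (/ Y - / P) with ((P - Y) / (Y * P)) by (field; lra).
    destruct (Rle_lt_dec (P - Y) 0).
    - assert (0 < Y * P) by nra. assert ((P - Y) / (Y * P) <= 0).
      { unfold Rdiv. assert (0 < / (Y * P)) by (apply Rinv_0_lt_compat; lra). nra. } lra.
    - assert (HYP : / 2 <= Y * P) by nra.
      assert (/ (Y * P) <= 2). { replace 2 with (/ / 2) by field. apply Rinv_le_contravar; lra. }
      unfold Rdiv. assert (0 < / (Y * P)) by (apply Rinv_0_lt_compat; lra). nra. }
  lra.
Qed.

Lemma prod_diff k (X Y : nat -> R) e : 0 <= e ->
  (forall i, (i < k)%nat -> 0 <= X i <= 1 /\ 0 <= Y i <= 1 /\ X i - Y i <= e) ->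
  (0 <= prod_to k X <= 1 /\ 0 <= prod_to k Y <= 1 /\ prod_to k X - prod_to k Y <= INR k * e).
Proof.
  intros He. induction k as [|k IH]; intros Hi.
  - simpl. lra.
  - destruct IH as [H1 [H2 H3]]. intros i Hik; apply Hi; lia.
    destruct (Hi k ltac:(lia)) as [Hx [Hy Hxy]].
    cbn [prod_to]. rewrite S_INR.
    set (Px := prod_to k X) in *. set (Py := prod_to k Y) in *.
    assert (Hk : 0 <= INR k) by apply pos_INR.
    split; [split; nra|]. split; [split; nra|].
    replace (Px * X k - Py * Y k) with ((Px - Py) * Y k + Px * (X k - Y k)) by ring.
    assert ((Px - Py) * Y k <= INR k * e).
    { destruct (Rle_lt_dec 0 (Px - Py)); nra. }
    assert (Px * (X k - Y k) <= e).
    { destruct (Rle_lt_dec 0 (X k - Y k)); nra. }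
    lra.
Qed.

Lemma prod_zero k (X : nat -> R) : (exists i, (i < k)%nat /\ X i = 0) -> prod_to k X = 0.
Proof.
  induction k as [|k IH]; intros [i [Hi Hx]]. lia.
  simpl. destruct (Nat.eq_dec i k) as [->|Hne]. rewrite Hx; ring.
  rewrite IH. ring. exists i. split; auto. lia.
Qed.

Lemma prod_range k (X : nat -> R) : (forall i, (i < k)%nat -> 0 <= X i <= 1) -> 0 <= prod_to k X <= 1.
Proof.
  induction k as [|k IH]; intros H; simpl. lra.
  assert (IH' := IH ltac:(intros; apply H; lia)). assert (H' := H k ltac:(lia)). nra.
Qed.

Lemma UB_zero lam : 0 < lam -> UB 0 lam = 1.
Proof.
  intros Hl. rewrite UB_eq. unfold gg, nn.
  replace (lam + 0 * sqrt lam) with lam by ring.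
  replace (lam / lam) with 1 by (field; lra).
  replace ((lam - lam) / sqrt lam) with 0 by (field; apply Rgt_not_eq, sqrt_lt_R0; lra).
  rewrite Rmult_0_l, Rplus_0_r. apply Rinv_1.
Qed.

Lemma exN L (lam0 : nat -> R) T : (forall i, (i < L)%nat -> 0 < lam0 i) ->
  exists N, forall m, (N <= m)%nat -> forall i, (i < L)%nat -> T <= INR m * lam0 i.
Proof.
  induction L as [|L IH]; intros Hl.
  - exists 0%nat. intros; lia.
  - destruct IH as [N1 HN1]. intros; apply Hl; lia.
    destruct (INR_unbounded (T / lam0 L)) as [N2 HN2].
    exists (Nat.max N1 N2). intros m Hm i Hi.
    destruct (Nat.eq_dec i L) as [->|Hne].
    + assert (INR N2 <= INR m) by (apply le_INR; lia).
      assert (Hp := Hl L ltac:(lia)).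
      assert (T / lam0 L * lam0 L = T) by (field; lra).
      assert (T / lam0 L * lam0 L <= INR m * lam0 L) by (apply Rmult_le_compat_r; lra). lra.
    + apply HN1; lia.
Qed.

Lemma gap_eq L c delta lam0 m beta :
  g_m L c delta lam0 m beta - f_m L c delta lam0 m beta =
  delta * (prod_to L (fun i => 1 - alpha_tilde (beta i) (INR m * lam0 i)) -
           prod_to L (fun i => 1 - UB (beta i) (INR m * lam0 i))).
Proof. unfold g_m, f_m. ring. Qed.

Theorem lemma7 (L : nat) (delta : R) (lam0 : nat -> R) (c : nat -> R -> R)
  (HL : (1 <= L)%nat)
  (Hdelta : 0 < delta)
  (Hlam0 : forall i, (i < L)%nat -> 0 < lam0 i)
  (Hcont : forall i, (i < L)%nat -> forall x, 0 <= x ->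
     forall eps, 0 < eps -> exists d, 0 < d /\
       forall y, 0 <= y -> Rabs (y - x) < d -> Rabs (c i y - c i x) < eps)
  (Hincr : forall i, (i < L)%nat -> forall x y, 0 <= x -> x < y -> c i x < c i y) :
  exists s : nat -> R,
    (exists N : nat, forall m, (N <= m)%nat -> is_lub (gap_set L c delta lam0 m) (s m))
    /\ Un_cv s 0.
Proof.
  destruct (exN L lam0 1 Hlam0) as [N0 HN0].
  set (s := fun m => epsilon (inhabits 0) (fun y => is_lub (gap_set L c delta lam0 m) y)).
  assert (Hrange : forall m, (N0 <= m)%nat -> forall beta, (forall i, (i < L)%nat -> 0 <= beta i) ->
     forall i, (i < L)%nat ->
       0 <= 1 - alpha_tilde (beta i) (INR m * lam0 i) <= 1 /\
       0 <= 1 - UB (beta i) (INR m * lam0 i) <= 1).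
  { intros m Hm beta Hb i Hi. assert (Hl := HN0 m Hm i Hi).
    assert (Ha := at_range _ _ Hl (Hb i Hi)).
    destruct (UB_le (INR m * lam0 i) (beta i) 0 ltac:(lra) (Hb i Hi) ltac:(lra)) as [HU _].
    assert (HU1 := UB_le1 _ (beta i) Hl (Hb i Hi)). lra. }
  assert (Hgap0 : forall m, (N0 <= m)%nat -> gap_set L c delta lam0 m
      (g_m L c delta lam0 m (fun _ => 0) - f_m L c delta lam0 m (fun _ => 0))).
  { intros m Hm. exists (fun _ => 0). split; auto. intros; lra. }
  assert (Hpos0 : forall m, (N0 <= m)%nat ->
      0 <= g_m L c delta lam0 m (fun _ => 0) - f_m L c delta lam0 m (fun _ => 0)).
  { intros m Hm. rewrite gap_eq.
    rewrite (prod_zero L (fun i => 1 - UB 0 (INR m * lam0 i))).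
    2:{ exists 0%nat. split. lia. rewrite UB_zero. ring. assert (H := HN0 m Hm 0%nat ltac:(lia)). lra. }
    assert (0 <= prod_to L (fun i => 1 - alpha_tilde 0 (INR m * lam0 i))).
    { apply prod_range. intros i Hi. apply (Hrange m Hm (fun _ => 0)); auto. intros; lra. }
    nra. }
  assert (Hub : forall m, (N0 <= m)%nat -> forall y, gap_set L c delta lam0 m y -> y <= delta).
  { intros m Hm y [beta [Hb ->]]. rewrite gap_eq.
    assert (H1 := prod_range L (fun i => 1 - alpha_tilde (beta i) (INR m * lam0 i))
      ltac:(intros i Hi; apply (Hrange m Hm beta Hb i Hi))).
    assert (H2 := prod_range L (fun i => 1 - UB (beta i) (INR m * lam0 i))
      ltac:(intros i Hi; apply (Hrange m Hm beta Hb i Hi))).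
    nra. }
  assert (Hlub : forall m, (N0 <= m)%nat -> is_lub (gap_set L c delta lam0 m) (s m)).
  { intros m Hm. unfold s. apply epsilon_spec.
    destruct (completeness (gap_set L c delta lam0 m)) as [x Hx].
    exists delta. intros y Hy. apply (Hub m Hm y Hy).
    eexists. apply Hgap0; auto.
    exists x; exact Hx. }
  exists s. split. exists N0. exact Hlub.
  intros eps Heps.
  assert (HLr : 1 <= INR L) by (replace 1 with (INR 1) by reflexivity; apply le_INR; auto).
  set (e := eps / (2 * delta * INR L)).
  assert (He : 0 < e) by (apply Rdiv_lt_0_compat; nra).
  destruct (coord_bound e He) as [Lam [HLam1 HLam]].
  destruct (exN L lam0 Lam Hlam0) as [N1 HN1].
  exists (Nat.max N0 N1). intros m Hm.
  assert (Hm0 : (N0 <= m)%nat) by lia. assert (Hm1 : (N1 <= m)%nat) by lia.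
  destruct (Hlub m Hm0) as [Hs1 Hs2].
  assert (Hge : 0 <= s m) by (eapply Rle_trans; [apply (Hpos0 m Hm0)| apply Hs1; apply Hgap0; auto]).
  assert (Hle : s m <= eps / 2).
  { apply Hs2. intros y [beta [Hb ->]]. rewrite gap_eq.
    destruct (prod_diff L (fun i => 1 - alpha_tilde (beta i) (INR m * lam0 i))
                          (fun i => 1 - UB (beta i) (INR m * lam0 i)) e ltac:(lra)) as [_ [_ H]].
    { intros i Hi. destruct (Hrange m Hm0 beta Hb i Hi) as [Ha Hu]. split; auto. split; auto.
      assert (H := HLam _ (beta i) (HN1 m Hm1 i Hi) (Hb i Hi)). lra. }
    assert (INR L * e = eps / (2 * delta)) by (unfold e; field; lra).
    apply Rle_trans with (delta * (INR L * e)). apply Rmult_le_compat_l; lra.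
    rewrite H0. right. field. lra. }
  unfold R_dist. rewrite Rminus_0_r, Rabs_right by lra. lra.
Qed.
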